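(* For every $(a',b',c')\in\mathbb{C}^3$, the formal deformation $(\{\cdot,\cdot\}^{[a',b',c']}_n)_{n\ge0}$ of $\widetilde J$ is modular-isomorphic to one of the following: (1) $(\{\cdot,\cdot\}^{[1,b,c]}_n)_{n\ge0}$ for some $(b,c)\in\mathbb{C}^2$; (2) $(\{\cdot,\cdot\}^{[0,1,c]}_n)_{n\ge0}$ for some $c\in\mathbb{C}$; (3) $(\{\cdot,\cdot\}^{[0,0,c]}_n)_{n\ge0}$ for some $c\in\mathbb{C}$. Moreover, any two distinct deformations in this list (distinct families, or the same family with different parameter values) are not modular-isomorphic.
   Context: Let $\widetilde J=\mathbb{C}[E_4,E_6,A,B]$ be the polynomial algebra in four algebraically independent variables, bigraded by weight and index, where $E_4$ has weight $4$ and index $0$, $E_6$ has weight $6$ and index $0$, $A$ has weight $-2$ and index $1$, $B$ has weight $0$ and index $1$; $\widetilde J_{k,p}$ denotes the homogeneous component of weight $k$ and index $p$. (This is the algebra of weak Jacobi forms of even weight on $\mathrm{SL}(2,\mathbb{Z})$.) For $(a,b)\in\mathbb{C}^2$, $S_{a,b}$ is the derivation of $\widetilde J$ with $S_{a,b}(E_4)=-\tfrac13E_6$, $S_{a,b}(E_6)=-\tfrac12E_4^2$, $S_{a,b}(A)=aB$, $S_{a,b}(B)=bE_4A$. For $c\in\mathbb{C}$ and $n\ge0$, $\{\cdot,\cdot\}^{[a,b,c]}_n$ is the bilinear map on $\widetilde J$ defined on homogeneous $f\in\widetilde J_{k,p}$, $g\in\widetilde J_{\ell,q}$ by $\{f,g\}^{[a,b,c]}_n=\sum_{r=0}^n(-1)^r\binom{k+cp+n-1}{n-r}\binom{\ell+cq+n-1}{r}S_{a,b}^r(f)\,S_{a,b}^{n-r}(g)$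 (complex binomial coefficients $\binom{x}{m}=x(x-1)\cdots(x-m+1)/m!$). Each such sequence is a formal deformation of $\widetilde J$. Two such formal deformations $(\{\cdot,\cdot\}^{[a,b,c]}_n)_n$ and $(\{\cdot,\cdot\}^{[a',b',c']}_n)_n$ are modular-isomorphic if there is a $\mathbb{C}$-linear bijection $\phi:\widetilde J\to\widetilde J$ mapping each $\widetilde J_{k,p}$ into $\widetilde J_{k,p}$ and such that $\phi(\{f,g\}^{[a,b,c]}_j)=\{\phi(f),\phi(g)\}^{[a',b',c']}_j$ for all $j\ge0$ and $f,g\in\widetilde J$. *)

(* Defs.v *)
From HB Require Import structures.
From mathcomp Require Import all_boot all_order all_algebra.
Set Implicit Arguments. Unset Strict Implicit. Unset Printing Implicit Defensive.
Import Order.TTheory GRing.Theory Num.Theory.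
Local Open Scope ring_scope.

Section JacobiAlgebra.
Variable C : numClosedFieldType.

(* J~ = C[E4,E6,A,B] as iterated polynomials: outermost variable B,
   then A, then E6, innermost E4.  The coefficient of
   E4^i E6^j A^l B^m in f is  f`_m`_l`_j`_i. *)
Definition Jt := {poly {poly {poly {poly C}}}}.

Definition cst (x : C) : Jt := x%:P%:P%:P%:P.
Definition vE4 : Jt := ('X : {poly C})%:P%:P%:P.
Definition vE6 : Jt := ('X : {poly {poly C}})%:P%:P.
Definition vA  : Jt := ('X : {poly {poly {poly C}}})%:P.
Definition vB  : Jt := 'X.

Definition jcoef (f : Jt) (i j l m : nat) : C := f`_m`_l`_j`_i.

Definition mweight (i j l m : nat) : int := (4 * i + 6 * j)%:Z - (2 * l)%:Z.
Definition mindex (i j l m : nat) : int := (l + m)%:Z.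

Definition mono (i j l m : nat) : Jt := vE4 ^+ i * vE6 ^+ j * vA ^+ l * vB ^+ m.

Definition homog (k p : int) (f : Jt) : Prop :=
  forall i j l m, jcoef f i j l m != 0 -> mweight i j l m = k /\ mindex i j l m = p.

Definition dB (f : Jt) : Jt := deriv f.
Definition dA (f : Jt) : Jt := map_poly (@deriv _) f.
Definition dE6 (f : Jt) : Jt := map_poly (map_poly (@deriv _)) f.
Definition dE4 (f : Jt) : Jt := map_poly (map_poly (map_poly (@deriv _))) f.

Definition Sder (a b : C) (f : Jt) : Jt :=
  dE4 f * (cst (- (1 / 3%:R)) * vE6) + dE6 f * (cst (- (1 / 2%:R)) * vE4 ^+ 2)
  + dA f * (cst a * vB) + dB f * (cst b * vE4 * vA).

Definition binC (x : C) (m : nat) : C :=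
  (\prod_(i < m) (x - i%:R)) / (m`!)%:R.

(* bracket on homogeneous f in J~_{k,p}, g in J~_{l,q} *)
Definition hbracket (a b c : C) (n : nat) (k p l q : int) (f g : Jt) : Jt :=
  \sum_(r < n.+1)
     cst ((-1) ^+ r * binC (k%:~R + c * p%:~R + n%:R - 1) (n - r)
                    * binC (l%:~R + c * q%:~R + n%:R - 1) r)
     * (iter r (Sder a b) f * iter (n - r) (Sder a b) g).

Definition mbracket (a b c : C) (n : nat) (i1 j1 l1 m1 i2 j2 l2 m2 : nat) : Jt :=
  hbracket a b c n (mweight i1 j1 l1 m1) (mindex i1 j1 l1 m1)
                   (mweight i2 j2 l2 m2) (mindex i2 j2 l2 m2)
                   (mono i1 j1 l1 m1) (mono i2 j2 l2 m2).

Definition bracket (a b c : C) (n : nat) (f g : Jt) : Jt :=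
  \sum_(m1 < size f) \sum_(l1 < size f`_m1) \sum_(j1 < size f`_m1`_l1)
  \sum_(i1 < size f`_m1`_l1`_j1)
  \sum_(m2 < size g) \sum_(l2 < size g`_m2) \sum_(j2 < size g`_m2`_l2)
  \sum_(i2 < size g`_m2`_l2`_j2)
    cst (jcoef f i1 j1 l1 m1 * jcoef g i2 j2 l2 m2)
    * mbracket a b c n i1 j1 l1 m1 i2 j2 l2 m2.

Definition modiso (t t' : C * C * C) : Prop :=
  let: (a, b, c) := t in let: (a', b', c') := t' in
  exists phi : Jt -> Jt,
    [/\ bijective phi,
        (forall x y, phi (x + y) = phi x + phi y),
        (forall (s : C) x, phi (cst s * x) = cst s * phi x),
        (forall k p f, homog k p f -> homog k p (phi f)) &
        (forall n f g, phi (bracket a b c n f g) = bracket a' b' c' n (phi f) (phi g))].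

Definition canonical_triple (t : C * C * C) : Prop :=
  let: (a, b, c) := t in a = 1 \/ (a = 0 /\ b = 1) \/ (a = 0 /\ b = 0).

End JacobiAlgebra.

(* Main.v *)
Require Import Defs.
From HB Require Import structures.
From mathcomp Require Import all_boot all_order all_algebra.
Import Order.TTheory GRing.Theory Num.Theory.
Local Open Scope ring_scope.
From mathcomp Require Import ring zify.

Lemma map_polyCM (R : nzRingType) (F : {additive R -> R}) (c : R) (p : {poly R}) :
  (forall x, F (c * x) = c * F x) -> map_poly F (c%:P * p) = c%:P * map_poly F p.
Proof. by move=> H; apply/polyP=> i; rewrite coef_map !coefCM coef_map H. Qed.

Lemma derivCM' (R : nzRingType) (c : R) (p : {poly R}) : deriv (c%:P * p) = c%:P * deriv p.
Proof. by rewrite !mul_polyC derivZ. Qed.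

Section S.
Variable C : numClosedFieldType.
Local Notation Jt := (Jt C).
Local Notation P3 := {poly {poly {poly C}}}.

Lemma jcoef_ext (f g : Jt) : (forall i j l m, jcoef f i j l m = jcoef g i j l m) -> f = g.
Proof. move=> H; apply/polyP=> m; apply/polyP=> l; apply/polyP=> j; apply/polyP=> i; exact: H. Qed.

Lemma jcoefD (f g : Jt) i j l m : jcoef (f + g) i j l m = jcoef f i j l m + jcoef g i j l m.
Proof. by rewrite /jcoef !coefD. Qed.
Lemma jcoefB (f g : Jt) i j l m : jcoef (f - g) i j l m = jcoef f i j l m - jcoef g i j l m.
Proof. by rewrite /jcoef !coefB. Qed.
Lemma jcoef0 i j l m : jcoef (0 : Jt) i j l m = 0.
Proof. by rewrite /jcoef !coef0. Qed.
Lemma jcoef_cstM (s : C) (f : Jt) i j l m : jcoef (cst s * f) i j l m = s * jcoef f i j l m.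
Proof. by rewrite /jcoef /cst !coefCM. Qed.

Lemma mono_eq i j l m : mono C i j l m =
  ((((('X^i : {poly C})%:P * 'X^j)%:P * 'X^l)%:P) * 'X^m).
Proof.
rewrite /mono /vE4 /vE6 /vA /vB !rmorphXn /= !rmorphM /= !rmorphXn /=.
by [].
Qed.

Lemma jcoef_mono i0 j0 l0 m0 i j l m : jcoef (mono C i0 j0 l0 m0) i j l m =
  ((i == i0) && (j == j0) && (l == l0) && (m == m0))%:R.
Proof.
rewrite mono_eq /jcoef coefCM coefXn; case: (m == m0); last by rewrite andbF mulr0 !coef0.
rewrite mulr1 coefCM coefXn; case: (l == l0); last by rewrite andbF mulr0 !coef0.
rewrite mulr1 coefCM coefXn; case: (j == j0); last by rewrite andbF mulr0 !coef0.
by rewrite mulr1 coefXn !andbT.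
Qed.

Lemma cstM (x y : C) : cst (x * y) = cst x * cst y. Proof. by rewrite /cst !polyCM. Qed.
Lemma cstD (x y : C) : cst (x + y) = cst x + cst y. Proof. by rewrite /cst !polyCD. Qed.
Lemma cstN (x : C) : cst (- x) = - cst x. Proof. by rewrite /cst !polyCN. Qed.
Lemma cstB (x y : C) : cst (x - y) = cst x - cst y. Proof. by rewrite /cst !polyCB. Qed.

Lemma dB_cst s (f : Jt) : dB (cst s * f) = cst s * dB f.
Proof. by rewrite /dB /cst derivCM'. Qed.
Lemma dA_cst s (f : Jt) : dA (cst s * f) = cst s * dA f.
Proof. by rewrite /dA /cst map_polyCM // => x; exact: derivCM'. Qed.
Lemma dE6_cst s (f : Jt) : dE6 (cst s * f) = cst s * dE6 f.
Proof.
rewrite /dE6 /cst map_polyCM // => x; apply: map_polyCM => y; exact: derivCM'.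
Qed.
Lemma dE4_cst s (f : Jt) : dE4 (cst s * f) = cst s * dE4 f.
Proof.
rewrite /dE4 /cst map_polyCM // => x; apply: map_polyCM => y; apply: map_polyCM => z; exact: derivCM'.
Qed.

Lemma Sder_cst a b s (f : Jt) : Sder a b (cst s * f) = cst s * Sder a b f.
Proof.
have H : forall (u d1 d2 d3 d4 x1 x2 x3 x4 : Jt),
  u*d1*x1 + u*d2*x2 + u*d3*x3 + u*d4*x4 = u*(d1*x1+d2*x2+d3*x3+d4*x4).
  by move=> *; rewrite !mulrDr !mulrA.
rewrite /Sder dB_cst dA_cst dE6_cst dE4_cst; exact: H.
Qed.

Lemma iterS_cst a b s (f : Jt) r : iter r (Sder a b) (cst s * f) = cst s * iter r (Sder a b) f.
Proof. by elim: r => //= r ->; rewrite Sder_cst. Qed.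
Lemma jcoef_dE4 (f : Jt) i j l m : jcoef (dE4 f) i j l m = jcoef f i.+1 j l m *+ i.+1.
Proof. by rewrite /jcoef /dE4 !coef_map /= coef_deriv. Qed.
Lemma jcoef_dE6 (f : Jt) i j l m : jcoef (dE6 f) i j l m = jcoef f i j.+1 l m *+ j.+1.
Proof. by rewrite /jcoef /dE6 !coef_map /= coef_deriv coefMn. Qed.
Lemma jcoef_dA (f : Jt) i j l m : jcoef (dA f) i j l m = jcoef f i j l.+1 m *+ l.+1.
Proof. by rewrite /jcoef /dA !coef_map /= coef_deriv !coefMn. Qed.
Lemma jcoef_dB (f : Jt) i j l m : jcoef (dB f) i j l m = jcoef f i j l m.+1 *+ m.+1.
Proof. by rewrite /jcoef /dB coef_deriv !coefMn. Qed.
Lemma ind_shift (P : bool) i0 i : ((i.+1 == i0) && P)%:R *+ i.+1 = (i0%:R : C) * ((i == i0.-1) && P)%:R.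
Proof.
case: i0 => [|k] /=; first by rewrite mul0r mul0rn.
rewrite eqSS; case: eqP => [->|_] /=; last by rewrite mulr0 mul0rn.
by case: P; rewrite /= ?mulr1 ?mulr0 ?mul0rn.
Qed.

Lemma dE4_mono i j l m : dE4 (mono C i j l m) = cst (i%:R) * mono C i.-1 j l m.
Proof.
apply: jcoef_ext => i' j' l' m'; rewrite jcoef_dE4 jcoef_cstM !jcoef_mono.
by rewrite -!andbA ind_shift.
Qed.
Lemma dE6_mono i j l m : dE6 (mono C i j l m) = cst (j%:R) * mono C i j.-1 l m.
Proof.
apply: jcoef_ext => i' j' l' m'; rewrite jcoef_dE6 jcoef_cstM !jcoef_mono.
rewrite -!andbA [(i' == i) && _]andbCA ind_shift; congr (_ * _%:R).
by rewrite andbCA.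
Qed.
Lemma dA_mono i j l m : dA (mono C i j l m) = cst (l%:R) * mono C i j l.-1 m.
Proof.
apply: jcoef_ext => i' j' l' m'; rewrite jcoef_dA jcoef_cstM !jcoef_mono.
rewrite -!andbA [(j' == j) && _]andbCA [(i' == i) && _]andbCA ind_shift; congr (_ * _%:R).
by case: (l' == l.-1); rewrite /= ?andbF.
Qed.
Lemma dB_mono i j l m : dB (mono C i j l m) = cst (m%:R) * mono C i j l m.-1.
Proof.
apply: jcoef_ext => i' j' l' m'; rewrite jcoef_dB jcoef_cstM !jcoef_mono.
rewrite (andbC _ (m'.+1 == m)) ind_shift; congr (_ * _%:R).
by rewrite andbC.
Qed.

Lemma acs4 (R : comNzRingType) (a b c d a' b' c' d' : R) :
  a*b*c*d*(a'*b'*c'*d') = a*a'*(b*b')*(c*c')*(d*d').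
Proof. ring. Qed.

Lemma monoM i j l m i' j' l' m' :
  mono C i j l m * mono C i' j' l' m' = mono C (i + i') (j + j') (l + l') (m + m').
Proof. rewrite /mono; generalize (vE4 C) (vE6 C) (vA C) (vB C) => x y z w; by rewrite !exprD acs4. Qed.
Lemma mE4 : vE4 C = mono C 1 0 0 0.
Proof. rewrite /mono; generalize (vE4 C) (vE6 C) (vA C) (vB C) => x y z w; by rewrite !expr0 expr1 !mulr1. Qed.
Lemma mE6 : vE6 C = mono C 0 1 0 0.
Proof. rewrite /mono; generalize (vE4 C) (vE6 C) (vA C) (vB C) => x y z w; by rewrite !expr0 expr1 !mulr1 mul1r. Qed.
Lemma mA : vA C = mono C 0 0 1 0.
Proof. rewrite /mono; generalize (vE4 C) (vE6 C) (vA C) (vB C) => x y z w; by rewrite !expr0 expr1 !mulr1 !mul1r. Qed.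
Lemma mB : vB C = mono C 0 0 0 1.
Proof. rewrite /mono; generalize (vE4 C) (vE6 C) (vA C) (vB C) => x y z w; by rewrite !expr0 expr1 !mul1r. Qed.
Lemma mE4sq : vE4 C ^+ 2 = mono C 2 0 0 0.
Proof. rewrite /mono; generalize (vE4 C) (vE6 C) (vA C) (vB C) => x y z w; by rewrite !expr0 !mulr1. Qed.
Lemma mE4A : vE4 C * vA C = mono C 1 0 1 0. Proof. by rewrite mE4 mA monoM. Qed.
Lemma JmulA (x y z : Jt) : x * (y * z) = x * y * z. Proof. exact: mulrA. Qed.
Lemma JmulC (x y : Jt) : x * y = y * x. Proof. exact: mulrC. Qed.
Lemma JmulCA (x y z : Jt) : x * (y * z) = y * (x * z). Proof. exact: mulrCA. Qed.
Lemma JmulACA (x y z w : Jt) : x * y * (z * w) = x * z * (y * w). Proof. exact: mulrACA. Qed.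

Lemma rearr1 s t (M N : Jt) : cst s * M * (cst t * N) = cst (t * s) * (M * N).
Proof. by rewrite JmulACA -cstM [s * t]mulrC. Qed.

Lemma SderM a b (f : Jt) : Sder a b f =
  dE4 f * (cst (- (1 / 3%:R)) * mono C 0 1 0 0) + dE6 f * (cst (- (1 / 2%:R)) * mono C 2 0 0 0)
  + dA f * (cst a * mono C 0 0 0 1) + dB f * (cst b * mono C 1 0 1 0).
Proof.
rewrite /Sder -mE6 -mE4sq -mB -mE4A; generalize (vE4 C) (vA C) (cst b) => x y z; by rewrite [z * (x * y)]JmulA.
Qed.

Lemma S_mono a b i j l m : Sder a b (mono C i j l m) =
  cst (- (1 / 3%:R) * i%:R) * mono C i.-1 j.+1 l m
  + cst (- (1 / 2%:R) * j%:R) * mono C i.+2 j.-1 l m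
  + cst (a * l%:R) * mono C i j l.-1 m.+1
  + cst (b * m%:R) * mono C i.+1 j l.+1 m.-1.
Proof.
rewrite SderM dE4_mono dE6_mono dA_mono dB_mono. rewrite !rearr1. rewrite !monoM.
rewrite !addn0 !addn1 !addn2. done.
Qed.

Lemma sum_single (V : nmodType) n (G : 'I_n -> V) (k : 'I_n) :
  (forall i, i != k -> G i = 0) -> \sum_(i < n) G i = G k.
Proof. by move=> H; rewrite (bigD1 k) //= big1 ?addr0 // => i /H. Qed.

Lemma ord_ne n k (h : (k < n)%N) (i : 'I_n) : i != Ordinal h -> (i : nat) != k.
Proof. by apply: contraNneq => e; apply/eqP/val_inj. Qed.

Definition nsum (V : nmodType) (f : Jt) (F : nat -> nat -> nat -> nat -> V) : V :=
  \sum_(m < size f) \sum_(l < size f`_m) \sum_(j < size f`_m`_l)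
  \sum_(i < size f`_m`_l`_j) F i j l m.
Arguments nsum {V}.

Lemma nsum_single (V : nmodType) (f : Jt) (F : nat -> nat -> nat -> nat -> V) i0 j0 l0 m0 :
  jcoef f i0 j0 l0 m0 != 0 ->
  (forall i j l m, ~~ [&& i == i0, j == j0, l == l0 & m == m0] -> F i j l m = 0) ->
  nsum f F = F i0 j0 l0 m0.
Proof.
rewrite /jcoef => nz H.
have hm : (m0 < size f)%N.
  by rewrite ltnNge; apply: contra nz => /(nth_default 0) ->; rewrite !coef0.
have hl : (l0 < size (f`_m0)%R)%N.
  by rewrite ltnNge; apply: contra nz => /(nth_default 0) ->; rewrite !coef0.
have hj : (j0 < size (f`_m0`_l0)%R)%N.
  by rewrite ltnNge; apply: contra nz => /(nth_default 0) ->; rewrite !coef0.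
have hi : (i0 < size (f`_m0`_l0`_j0)%R)%N.
  by rewrite ltnNge; apply: contra nz => /(nth_default 0) ->.
rewrite /nsum (@sum_single _ _ _ (Ordinal hm)) /=; last first.
  move=> m /ord_ne ne; apply: big1 => l _; apply: big1 => j _; apply: big1 => i _.
  by apply: H; rewrite (negbTE ne) !andbF.
rewrite (@sum_single _ _ _ (Ordinal hl)) /=; last first.
  move=> l /ord_ne ne; apply: big1 => j _; apply: big1 => i _.
  by apply: H; rewrite (negbTE ne) !andbF.
rewrite (@sum_single _ _ _ (Ordinal hj)) /=; last first.
  move=> j /ord_ne ne; apply: big1 => i _.
  by apply: H; rewrite (negbTE ne) !andbF.
rewrite (@sum_single _ _ _ (Ordinal hi)) // => i /ord_ne ne.
by apply: H; rewrite (negbTE ne).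
Qed.

Lemma bracket_nsum a b c n (f g : Jt) : bracket a b c n f g =
  nsum f (fun i1 j1 l1 m1 => nsum g (fun i2 j2 l2 m2 =>
    cst (jcoef f i1 j1 l1 m1 * jcoef g i2 j2 l2 m2) * mbracket a b c n i1 j1 l1 m1 i2 j2 l2 m2)).
Proof. by []. Qed.

Lemma cst0M (x : Jt) : cst 0 * x = 0.
Proof. by apply: jcoef_ext => i j l m; rewrite jcoef_cstM jcoef0 mul0r. Qed.
Lemma cst1M (x : Jt) : cst 1 * x = x.
Proof. by apply: jcoef_ext => i j l m; rewrite jcoef_cstM mul1r. Qed.

Lemma jcoef_cmono s i0 j0 l0 m0 i j l m :
  jcoef (cst s * mono C i0 j0 l0 m0) i j l m = s * ([&& i == i0, j == j0, l == l0 & m == m0])%:R.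
Proof. by rewrite jcoef_cstM jcoef_mono -!andbA. Qed.

Lemma bracket_single a b c n s t i1 j1 l1 m1 i2 j2 l2 m2 : s != 0 -> t != 0 ->
  bracket a b c n (cst s * mono C i1 j1 l1 m1) (cst t * mono C i2 j2 l2 m2) =
  cst (s * t) * mbracket a b c n i1 j1 l1 m1 i2 j2 l2 m2.
Proof.
move=> s0 t0; rewrite bracket_nsum (@nsum_single _ _ _ i1 j1 l1 m1).
- rewrite (@nsum_single _ _ _ i2 j2 l2 m2).
  + by rewrite !jcoef_cmono !eqxx !mulr1.
  + by rewrite jcoef_cmono !eqxx mulr1.
  + move=> i j l m ne; rewrite [jcoef (cst t * _) _ _ _ _]jcoef_cmono (negbTE ne) mulr0 mulr0.
    exact: cst0M.
- by rewrite jcoef_cmono !eqxx mulr1.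
- move=> i j l m ne; rewrite /nsum; apply: big1 => m' _; apply: big1 => l' _; apply: big1 => j' _;
  apply: big1 => i' _.
  rewrite [jcoef (cst s * _) _ _ _ _]jcoef_cmono (negbTE ne) mulr0 mul0r.
  exact: cst0M.
Qed.
Lemma binC0 (x : C) : binC x 0 = 1.
Proof. by rewrite /binC big_ord0 divr1. Qed.
Lemma binC1 (x : C) : binC x 1 = x.
Proof. by rewrite /binC big_ord1 subr0 divr1. Qed.

Lemma hbr0 a b c k p l q (f g : Jt) : hbracket a b c 0 k p l q f g = f * g.
Proof.
rewrite /hbracket big_ord1 /= subnn !binC0.
have -> : ((-1) ^+ 0 * 1 * 1 : C) = 1 by rewrite expr0 !mulr1.
exact: cst1M.
Qed.
Lemma hbr1 a b c k p l q (f g : Jt) : hbracket a b c 1 k p l q f g =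
  cst (k%:~R + c * p%:~R) * (f * Sder a b g) + cst (- (l%:~R + c * q%:~R)) * (Sder a b f * g).
Proof.
rewrite /hbracket big_ord_recr big_ord1 /= subn0 subnn !binC0 !binC1.
have -> : ((-1) ^+ 0 * (k%:~R + c * p%:~R + 1%:R - 1) * 1 : C) = k%:~R + c * p%:~R.
  by rewrite expr0 mul1r mulr1 addrK.
have -> : ((-1) ^+ 1 * 1 * (l%:~R + c * q%:~R + 1%:R - 1) : C) = - (l%:~R + c * q%:~R).
  by rewrite expr1 mulr1 addrK mulN1r.
by [].
Qed.
Lemma JmulDr (x y z : Jt) : x * (y + z) = x * y + x * z. Proof. exact: mulrDr. Qed.
Lemma JmulDl (x y z : Jt) : (y + z) * x = y * x + z * x. Proof. exact: mulrDl. Qed.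

Lemma monoCM i j l m s (M : Jt) : mono C i j l m * (cst s * M) = cst s * (mono C i j l m * M).
Proof. exact: JmulCA. Qed.
Lemma cstMmono i j l m s (M : Jt) : cst s * M * mono C i j l m = cst s * (M * mono C i j l m).
Proof. by rewrite JmulA. Qed.

Lemma mono_S a b i j l m i' j' l' m' : mono C i j l m * Sder a b (mono C i' j' l' m') =
  cst (- (1 / 3%:R) * i'%:R) * mono C (i + i'.-1) (j + j'.+1) (l + l') (m + m')
  + cst (- (1 / 2%:R) * j'%:R) * mono C (i + i'.+2) (j + j'.-1) (l + l') (m + m')
  + cst (a * l'%:R) * mono C (i + i') (j + j') (l + l'.-1) (m + m'.+1)
  + cst (b * m'%:R) * mono C (i + i'.+1) (j + j') (l + l'.+1) (m + m'.-1).
Proof. by rewrite S_mono !JmulDr !monoCM !monoM. Qed.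

Lemma S_mono_r a b i j l m i' j' l' m' : Sder a b (mono C i' j' l' m') * mono C i j l m =
  cst (- (1 / 3%:R) * i'%:R) * mono C (i'.-1 + i) (j'.+1 + j) (l' + l) (m' + m)
  + cst (- (1 / 2%:R) * j'%:R) * mono C (i'.+2 + i) (j'.-1 + j) (l' + l) (m' + m)
  + cst (a * l'%:R) * mono C (i' + i) (j' + j) (l'.-1 + l) (m'.+1 + m)
  + cst (b * m'%:R) * mono C (i'.+1 + i) (j' + j) (l'.+1 + l) (m'.-1 + m).
Proof. by rewrite S_mono !JmulDl !cstMmono !monoM. Qed.

Lemma mbr1 a b c i1 j1 l1 m1 i2 j2 l2 m2 : mbracket a b c 1 i1 j1 l1 m1 i2 j2 l2 m2 =
  cst ((mweight i1 j1 l1 m1)%:~R + c * (mindex i1 j1 l1 m1)%:~R) *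
     (mono C i1 j1 l1 m1 * Sder a b (mono C i2 j2 l2 m2))
  + cst (- ((mweight i2 j2 l2 m2)%:~R + c * (mindex i2 j2 l2 m2)%:~R)) *
     (Sder a b (mono C i1 j1 l1 m1) * mono C i2 j2 l2 m2).
Proof. exact: hbr1. Qed.

Lemma mbr0 a b c i1 j1 l1 m1 i2 j2 l2 m2 : mbracket a b c 0 i1 j1 l1 m1 i2 j2 l2 m2 =
  mono C (i1 + i2) (j1 + j2) (l1 + l2) (m1 + m2).
Proof. by rewrite /mbracket hbr0 monoM. Qed.

Lemma bracket_mono a b c n i1 j1 l1 m1 i2 j2 l2 m2 :
  bracket a b c n (mono C i1 j1 l1 m1) (mono C i2 j2 l2 m2) = mbracket a b c n i1 j1 l1 m1 i2 j2 l2 m2.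
Proof.
rewrite -[mono C i1 j1 l1 m1]cst1M -[mono C i2 j2 l2 m2]cst1M bracket_single ?oner_neq0 //.
by rewrite mulr1 cst1M.
Qed.

Lemma homog_mono i j l m : homog (mweight i j l m) (mindex i j l m) (mono C i j l m).
Proof.
move=> i' j' l' m'; rewrite jcoef_mono -!andbA.
case E: [&& i' == i, j' == j, l' == l & m' == m]; last by rewrite eqxx.
by move/and4P: E => [/eqP-> /eqP-> /eqP-> /eqP->].
Qed.

Lemma homog_unique k p (h : Jt) i0 j0 l0 m0 : homog k p h ->
  (forall i j l m, mweight i j l m = k -> mindex i j l m = p -> [&& i == i0, j == j0, l == l0 & m == m0]) ->
  h = cst (jcoef h i0 j0 l0 m0) * mono C i0 j0 l0 m0.
Proof.
move=> Hh U; apply: jcoef_ext => i j l m; rewrite jcoef_cmono.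
case E: [&& i == i0, j == j0, l == l0 & m == m0].
  by move/and4P: E => [/eqP-> /eqP-> /eqP-> /eqP->]; rewrite mulr1.
rewrite mulr0; case: (eqVneq (jcoef h i j l m) 0) => // nz.
by case: (Hh _ _ _ _ nz) => w x; rewrite U in E.
Qed.
End S.

Section Inv.
Variable C : numClosedFieldType.
Local Notation Jt := (Jt C).
Variables (a b c a' b' c' : C) (phi : Jt -> Jt).
Hypothesis Hinj : injective phi.
Hypothesis Hadd : forall x y, phi (x + y) = phi x + phi y.
Hypothesis Hcst : forall s x, phi (cst s * x) = cst s * phi x.
Hypothesis Hhom : forall k p f, homog k p f -> homog k p (phi f).
Hypothesis Hbr : forall n f g, phi (bracket a b c n f g) = bracket a' b' c' n (phi f) (phi g).

Lemma moL : {f : nat -> nat -> nat -> nat -> Jt | f = mono C}.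
Proof. by exists (mono C). Qed.
Definition Mo := sval moL.
Lemma MoE : Mo = mono C. Proof. exact: (svalP moL). Qed.

Lemma Jaddr0 (x : Jt) : x + 0 = x. Proof. exact: addr0. Qed.

Lemma phi0 : phi 0 = 0.
Proof.
have := Hadd 0 0; rewrite Jaddr0 => H.
by apply/esym/(@addrI _ (phi 0)); rewrite Jaddr0 -H.
Qed.

Lemma mono_neq0 i j l m : mono C i j l m != 0.
Proof.
apply/eqP => /(congr1 (fun h => jcoef h i j l m)); rewrite jcoef_mono jcoef0 !eqxx /=.
by move/eqP; rewrite oner_eq0.
Qed.

Lemma phi_single i0 j0 l0 m0 :
  (forall i j l m, mweight i j l m = mweight i0 j0 l0 m0 -> mindex i j l m = mindex i0 j0 l0 m0 ->
     [&& i == i0, j == j0, l == l0 & m == m0]) ->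
  exists2 x, x != 0 & phi (Mo i0 j0 l0 m0) = cst x * Mo i0 j0 l0 m0.
Proof.
rewrite MoE; move=> U; have E := @homog_unique C _ _ _ _ _ _ _ (Hhom _ _ _ (homog_mono C i0 j0 l0 m0)) U.
exists (jcoef (phi (mono C i0 j0 l0 m0)) i0 j0 l0 m0) => //.
apply/eqP => z; rewrite z cst0M -phi0 in E.
by move: (mono_neq0 i0 j0 l0 m0); rewrite (Hinj _ _ E) eqxx.
Qed.

Lemma phi_br n i1 j1 l1 m1 i2 j2 l2 m2 x y : x != 0 -> y != 0 ->
  phi (Mo i1 j1 l1 m1) = cst x * Mo i1 j1 l1 m1 ->
  phi (Mo i2 j2 l2 m2) = cst y * Mo i2 j2 l2 m2 ->
  phi (mbracket a b c n i1 j1 l1 m1 i2 j2 l2 m2) = cst (x * y) * mbracket a' b' c' n i1 j1 l1 m1 i2 j2 l2 m2.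
Proof. rewrite MoE; by move=> nx ny h1 h2; rewrite -bracket_mono Hbr h1 h2 bracket_single. Qed.

Lemma phi_prod i1 j1 l1 m1 i2 j2 l2 m2 x y : x != 0 -> y != 0 ->
  phi (Mo i1 j1 l1 m1) = cst x * Mo i1 j1 l1 m1 ->
  phi (Mo i2 j2 l2 m2) = cst y * Mo i2 j2 l2 m2 ->
  phi (Mo (i1 + i2) (j1 + j2) (l1 + l2) (m1 + m2)) = cst (x * y) * Mo (i1 + i2) (j1 + j2) (l1 + l2) (m1 + m2).
Proof. by move=> nx ny h1 h2; have := @phi_br 0 i1 j1 l1 m1 i2 j2 l2 m2 x y nx ny h1 h2; rewrite !mbr0 MoE. Qed.

Definition T4 (s1 s2 s3 s4 : C) (M1 M2 M3 M4 : Jt) : Jt :=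
  cst s1 * M1 + cst s2 * M2 + cst s3 * M3 + cst s4 * M4.

Lemma mbr1_full (a0 b0 c0 : C) i1 j1 l1 m1 i2 j2 l2 m2 : mbracket a0 b0 c0 1 i1 j1 l1 m1 i2 j2 l2 m2 =
  cst ((mweight i1 j1 l1 m1)%:~R + c0 * (mindex i1 j1 l1 m1)%:~R) *
    T4 (- (1 / 3%:R) * i2%:R) (- (1 / 2%:R) * j2%:R) (a0 * l2%:R) (b0 * m2%:R)
      (Mo (i1 + i2.-1) (j1 + j2.+1) (l1 + l2) (m1 + m2))
      (Mo (i1 + i2.+2) (j1 + j2.-1) (l1 + l2) (m1 + m2))
      (Mo (i1 + i2) (j1 + j2) (l1 + l2.-1) (m1 + m2.+1))
      (Mo (i1 + i2.+1) (j1 + j2) (l1 + l2.+1) (m1 + m2.-1))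
  + cst (- ((mweight i2 j2 l2 m2)%:~R + c0 * (mindex i2 j2 l2 m2)%:~R)) *
    T4 (- (1 / 3%:R) * i1%:R) (- (1 / 2%:R) * j1%:R) (a0 * l1%:R) (b0 * m1%:R)
      (Mo (i1.-1 + i2) (j1.+1 + j2) (l1 + l2) (m1 + m2))
      (Mo (i1.+2 + i2) (j1.-1 + j2) (l1 + l2) (m1 + m2))
      (Mo (i1 + i2) (j1 + j2) (l1.-1 + l2) (m1.+1 + m2))
      (Mo (i1.+1 + i2) (j1 + j2) (l1.+1 + l2) (m1.-1 + m2)).
Proof.
rewrite MoE mbr1; congr (cst _ * _ + cst _ * _); [exact: mono_S | exact: S_mono_r].
Qed.

Lemma phi_T4 s1 s2 s3 s4 M1 M2 M3 M4 :
  phi (T4 s1 s2 s3 s4 M1 M2 M3 M4) = T4 s1 s2 s3 s4 (phi M1) (phi M2) (phi M3) (phi M4).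
Proof. by rewrite /T4 !Hadd !Hcst. Qed.

Lemma phi_lin K1 K2 X Y : phi (cst K1 * X + cst K2 * Y) = cst K1 * phi X + cst K2 * phi Y.
Proof. by rewrite Hadd !Hcst. Qed.

Lemma jcoef_T4 s1 s2 s3 s4 M1 M2 M3 M4 i j l m :
  jcoef (T4 s1 s2 s3 s4 M1 M2 M3 M4) i j l m =
  s1 * jcoef M1 i j l m + s2 * jcoef M2 i j l m + s3 * jcoef M3 i j l m + s4 * jcoef M4 i j l m.
Proof. by rewrite /T4 !jcoefD !jcoef_cstM. Qed.

Lemma jcoef_lin K1 K2 (X Y : Jt) i j l m :
  jcoef (cst K1 * X + cst K2 * Y) i j l m = K1 * jcoef X i j l m + K2 * jcoef Y i j l m.
Proof. by rewrite jcoefD !jcoef_cstM. Qed.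

Lemma e0S n : (0 == n.+1)%N = false. Proof. by []. Qed.
Lemma eS0 n : (n.+1 == 0)%N = false. Proof. by []. Qed.
Lemma p0 : (0.-1 = 0)%N. Proof. by []. Qed.
Lemma p1 : (1.-1 = 0)%N. Proof. by []. Qed.
Lemma bT : ((true : nat)%:R : C) = 1. Proof. by []. Qed.
Lemma bF : ((false : nat)%:R : C) = 0. Proof. by []. Qed.
Lemma jcoef_mono' i0 j0 l0 m0 i j l m : jcoef (Mo i0 j0 l0 m0) i j l m =
  ([&& i == i0, j == j0, l == l0 & m == m0])%:R.
Proof. by rewrite MoE jcoef_mono -!andbA. Qed.
Lemma jcoef_cMo s i0 j0 l0 m0 i j l m : jcoef (cst s * Mo i0 j0 l0 m0) i j l m =
  s * ([&& i == i0, j == j0, l == l0 & m == m0])%:R.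
Proof. by rewrite MoE jcoef_cmono. Qed.
Lemma mwB : mweight 0 0 0 1 = 0. Proof. by []. Qed.
Lemma miB : mindex 0 0 0 1 = 1. Proof. by []. Qed.
Lemma mwE6 : mweight 0 1 0 0 = 6. Proof. by []. Qed.
Lemma miE6 : mindex 0 1 0 0 = 0. Proof. by []. Qed.
Lemma lc (k P Q X Y : C) : k != 0 -> P = Q -> P - Q = k * (X - Y) -> X = Y.
Proof.
move=> k0 E H; apply/eqP; rewrite -subr_eq0; move: H; rewrite E subrr => /esym/eqP.
by rewrite mulf_eq0 (negbTE k0).
Qed.
Lemma n4 : (4 : C) != 0. Proof. by rewrite pnatr_eq0. Qed.
Lemma n3 : (3 : C) != 0. Proof. by rewrite pnatr_eq0. Qed.
Lemma n2 : (2 : C) != 0. Proof. by rewrite pnatr_eq0. Qed.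
Lemma mwE4 : mweight 1 0 0 0 = 4. Proof. by []. Qed.
Lemma miE4 : mindex 1 0 0 0 = 0. Proof. by []. Qed.
Lemma mwA : mweight 0 0 1 0 = - 2. Proof. by []. Qed.
Lemma miA : mindex 0 0 1 0 = 1. Proof. by []. Qed.

Lemma uniq_tac i0 j0 l0 m0 : (forall i j l m, mweight i j l m = mweight i0 j0 l0 m0 ->
  mindex i j l m = mindex i0 j0 l0 m0 -> (i = i0 /\ j = j0 /\ l = l0 /\ m = m0)) ->
  (forall i j l m, mweight i j l m = mweight i0 j0 l0 m0 -> mindex i j l m = mindex i0 j0 l0 m0 ->
     [&& i == i0, j == j0, l == l0 & m == m0]).
Proof. by move=> H i j l m W I; case: (H _ _ _ _ W I) => -> [-> [-> ->]]; rewrite !eqxx. Qed.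

Lemma inv_main : exists beta mu : C, [/\ beta != 0, mu != 0, c = c', a * mu = a' * beta & b * beta = b' * mu].
Proof.
have [al al0 hE4] : exists2 x, x != 0 & phi (Mo 1 0 0 0) = cst x * Mo 1 0 0 0.
  by apply: phi_single; apply: uniq_tac; rewrite /mweight /mindex => i j l m W I; lia.
have [ga ga0 hE6] : exists2 x, x != 0 & phi (Mo 0 1 0 0) = cst x * Mo 0 1 0 0.
  by apply: phi_single; apply: uniq_tac; rewrite /mweight /mindex => i j l m W I; lia.
have [be be0 hA] : exists2 x, x != 0 & phi (Mo 0 0 1 0) = cst x * Mo 0 0 1 0.
  by apply: phi_single; apply: uniq_tac; rewrite /mweight /mindex => i j l m W I; lia.
have [mu mu0 hB] : exists2 x, x != 0 & phi (Mo 0 0 0 1) = cst x * Mo 0 0 0 1.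
  by apply: phi_single; apply: uniq_tac; rewrite /mweight /mindex => i j l m W I; lia.
have hE4B : phi (Mo 1 0 0 1) = cst (al * mu) * Mo 1 0 0 1 := @phi_prod 1 0 0 0 0 0 0 1 al mu al0 mu0 hE4 hB.
have hE6A : phi (Mo 0 1 1 0) = cst (ga * be) * Mo 0 1 1 0 := @phi_prod 0 1 0 0 0 0 1 0 ga be ga0 be0 hE6 hA.
have hE4sq : phi (Mo 2 0 0 0) = cst (al * al) * Mo 2 0 0 0 := @phi_prod 1 0 0 0 1 0 0 0 al al al0 al0 hE4 hE4.
have hE4c : phi (Mo 3 0 0 0) = cst (al * (al * al)) * Mo 3 0 0 0 :=
  @phi_prod 1 0 0 0 2 0 0 0 al (al * al) al0 (mulf_neq0 al0 al0) hE4 hE4sq.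
have hE6sq : phi (Mo 0 2 0 0) = cst (ga * ga) * Mo 0 2 0 0 := @phi_prod 0 1 0 0 0 1 0 0 ga ga ga0 ga0 hE6 hE6.
have hE4A : phi (Mo 1 0 1 0) = cst (al * be) * Mo 1 0 1 0 := @phi_prod 1 0 0 0 0 0 1 0 al be al0 be0 hE4 hA.
have hE4E4A : phi (Mo 2 0 1 0) = cst (al * (al * be)) * Mo 2 0 1 0 :=
  @phi_prod 1 0 0 0 1 0 1 0 al (al * be) al0 (mulf_neq0 al0 be0) hE4 hE4A.
have hE6B : phi (Mo 0 1 0 1) = cst (ga * mu) * Mo 0 1 0 1 := @phi_prod 0 1 0 0 0 0 0 1 ga mu ga0 mu0 hE6 hB.
have E1 := congr1 (fun h => jcoef h 1 0 0 1) (@phi_br 1 1 0 0 0 0 0 1 0 al be al0 be0 hE4 hA).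
have E3 := congr1 (fun h => jcoef h 2 0 1 0) (@phi_br 1 1 0 0 0 0 0 0 1 al mu al0 mu0 hE4 hB).
have E4 := congr1 (fun h => jcoef h 0 1 0 1) (@phi_br 1 1 0 0 0 0 0 0 1 al mu al0 mu0 hE4 hB).
have E5 := congr1 (fun h => jcoef h 3 0 0 0) (@phi_br 1 1 0 0 0 0 1 0 0 al ga al0 ga0 hE4 hE6).
have E6 := congr1 (fun h => jcoef h 0 2 0 0) (@phi_br 1 1 0 0 0 0 1 0 0 al ga al0 ga0 hE4 hE6).
rewrite /= !mbr1_full ?addn0 ?add0n ?addn1 ?add1n ?p0 ?p1 in E1 E3 E4 E5 E6.
rewrite phi_lin !phi_T4 jcoef_cstM !jcoef_lin !jcoef_T4 in E1.
rewrite phi_lin !phi_T4 jcoef_cstM !jcoef_lin !jcoef_T4 in E3.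
rewrite phi_lin !phi_T4 jcoef_cstM !jcoef_lin !jcoef_T4 in E4.
rewrite phi_lin !phi_T4 jcoef_cstM !jcoef_lin !jcoef_T4 in E5.
rewrite phi_lin !phi_T4 jcoef_cstM !jcoef_lin !jcoef_T4 in E6.
rewrite ?hE4B ?hE6A ?hE4c ?hE6sq ?hE4E4A ?hE6B !jcoef_cMo !jcoef_mono' in E1 E3 E4 E5 E6.
rewrite !eqxx ?eqSS ?e0S ?eS0 ?andbT ?andbF ?bT ?bF in E1 E3 E4 E5 E6.
rewrite ?mwE4 ?miE4 ?mwA ?miA ?mwB ?miB ?mwE6 ?miE6 in E1 E3 E4 E5 E6.
have R1 : a * mu = a' * be.
  apply: (@lc (4 * al) _ _ _ _ (mulf_neq0 n4 al0) E1); ring.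
have R3 : b * al * be = b' * mu.
  apply: (@lc (4 * al) _ _ _ _ (mulf_neq0 n4 al0) E3); by field.
have R4 : c * ga = c' * al.
  apply: (@lc (mu / 3) _ _ _ _ _ E4); last by field.
  by rewrite mulf_neq0 // invr_eq0 n3.
have R5 : al * al = ga.
  apply: (@lc (- 2 * al) _ _ _ _ _ E5); last by field.
  by rewrite mulf_neq0 // oppr_eq0 n2.
have R6 : ga = al.
  apply: (@lc (2 * ga) _ _ _ _ (mulf_neq0 n2 ga0) E6); by field.
have al1 : al = 1.
  apply: (mulfI al0); rewrite mulr1 R5 R6 //.
move: R3 R4; rewrite R6 al1 !mulr1 => R3 R4.
by exists be, mu; split.
Qed.
End Inv.

Lemma coef_comp_CX (R : comNzRingType) (k : R) (p : {poly R}) m :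
  (p \Po (k%:P * 'X))`_m = k ^+ m * p`_m.
Proof.
rewrite coef_comp_poly.
under eq_bigr => i _ do rewrite exprMn -polyC_exp coefCM coefXn.
case: (ltnP m (size p)) => hm.
  rewrite (bigD1 (Ordinal hm)) //= eqxx mulr1 big1 ?addr0; first by rewrite mulrC.
  move=> i ne; have -> : (m == i) = false.
    by apply/negbTE; apply: contraNneq ne => e; apply/eqP/val_inj.
  by rewrite mulr0 mulr0.
rewrite nth_default // mulr0 big1 // => i _.
have -> : (m == i) = false by apply/negbTE; rewrite neq_ltn (leq_trans (ltn_ord i) hm) orbT.
by rewrite mulr0 mulr0.
Qed.

Section Phi.
Variable C : numClosedFieldType.
Local Notation Jt := (Jt C).
Variable mu : C.
Hypothesis mu0 : mu != 0.

Definition phiS (f : Jt) : Jt := f \Po (cst mu * 'X).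

Lemma coef_phiS (f : Jt) m : (phiS f)`_m = (mu ^+ m)%:P%:P%:P * f`_m.
Proof. by rewrite /phiS /cst coef_comp_CX !polyC_exp. Qed.

Lemma jcoef_phiS (f : Jt) i j l m : jcoef (phiS f) i j l m = mu ^+ m * jcoef f i j l m.
Proof. by rewrite /jcoef coef_phiS !coefCM. Qed.

Lemma size_phiS (f : Jt) : size (phiS f) = size f.
Proof.
rewrite /phiS size_comp_poly2 // /cst size_Cmul ?size_polyX //.
by rewrite !polyC_eq0.
Qed.
Lemma phiS_D (x y : Jt) : phiS (x + y) = phiS x + phiS y. Proof. exact: comp_polyD. Qed.
Lemma phiS_M (x y : Jt) : phiS (x * y) = phiS x * phiS y. Proof. exact: comp_polyM. Qed.
Lemma phiS_cst s : phiS (cst s) = cst s. Proof. exact: comp_polyC. Qed.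
Lemma phiS_cstM s (x : Jt) : phiS (cst s * x) = cst s * phiS x.
Proof. by rewrite phiS_M phiS_cst. Qed.
Lemma phiS_E4 : phiS (vE4 C) = vE4 C. Proof. exact: comp_polyC. Qed.
Lemma phiS_E6 : phiS (vE6 C) = vE6 C. Proof. exact: comp_polyC. Qed.
Lemma phiS_A : phiS (vA C) = vA C. Proof. exact: comp_polyC. Qed.
Lemma phiS_B : phiS (vB C) = cst mu * vB C. Proof. exact: comp_polyX. Qed.

Lemma phiS_mono i j l m : phiS (mono C i j l m) = cst (mu ^+ m) * mono C i j l m.
Proof.
apply: jcoef_ext => i' j' l' m'; rewrite jcoef_phiS jcoef_cstM !jcoef_mono.
by case: (eqVneq m' m) => [->|]; rewrite ?andbF ?mulr0.
Qed.

Lemma phiS_dE4 (f : Jt) : phiS (dE4 f) = dE4 (phiS f).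
Proof. by apply: jcoef_ext => i j l m; rewrite jcoef_phiS !jcoef_dE4 jcoef_phiS mulrnAr. Qed.
Lemma phiS_dE6 (f : Jt) : phiS (dE6 f) = dE6 (phiS f).
Proof. by apply: jcoef_ext => i j l m; rewrite jcoef_phiS !jcoef_dE6 jcoef_phiS mulrnAr. Qed.
Lemma phiS_dA (f : Jt) : phiS (dA f) = dA (phiS f).
Proof. by apply: jcoef_ext => i j l m; rewrite jcoef_phiS !jcoef_dA jcoef_phiS mulrnAr. Qed.
Lemma dB_phiS (f : Jt) : dB (phiS f) = cst mu * phiS (dB f).
Proof.
apply: jcoef_ext => i j l m; rewrite jcoef_cstM jcoef_dB !jcoef_phiS jcoef_dB.
by rewrite exprS !mulrnAr mulrA.
Qed.

Lemma phiS_S4 (d1 d2 d3 d4 X1 X2 X3 X4 : Jt) :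
  phiS (d1 * X1 + d2 * X2 + d3 * X3 + d4 * X4) =
  phiS d1 * phiS X1 + phiS d2 * phiS X2 + phiS d3 * phiS X3 + phiS d4 * phiS X4.
Proof. by rewrite !phiS_D !phiS_M. Qed.
Lemma phiS_X1 k : phiS (cst k * vE6 C) = cst k * vE6 C.
Proof. by rewrite phiS_cstM phiS_E6. Qed.
Lemma phiS_X2 k : phiS (cst k * vE4 C ^+ 2) = cst k * vE4 C ^+ 2.
Proof. by rewrite phiS_cstM /phiS rmorphXn /= -/(phiS _) phiS_E4. Qed.
Lemma phiS_X3 k : phiS (cst k * vB C) = cst (k * mu) * vB C.
Proof. by rewrite phiS_cstM phiS_B cstM JmulA. Qed.
Lemma phiS_X4 k : phiS (cst k * vE4 C * vA C) = cst k * vE4 C * vA C.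
Proof. by rewrite phiS_M phiS_cstM phiS_E4 phiS_A. Qed.

Lemma phiS_S a b (f : Jt) : phiS (Sder a b f) = Sder (a * mu) (b / mu) (phiS f).
Proof.
rewrite /Sder phiS_S4 phiS_X1 phiS_X2 phiS_X3 phiS_X4 phiS_dE4 phiS_dE6 phiS_dA.
congr (_ + _); rewrite dB_phiS.
have hb : cst b = cst (b / mu) * cst mu by rewrite -cstM divfK.
rewrite hb.
move: (phiS (dB f)) (cst mu) (cst (b / mu)) (vE4 C) (vA C) => d cm cb x z.
ring.
Qed.
Lemma phiS_iter a b r (f : Jt) :
  phiS (iter r (Sder a b) f) = iter r (Sder (a * mu) (b / mu)) (phiS f).
Proof. by elim: r => //= r IH; rewrite phiS_S IH. Qed.

Lemma phiS_sum N (F : 'I_N -> Jt) : phiS (\sum_(r < N) F r) = \sum_(r < N) phiS (F r).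
Proof. exact: raddf_sum. Qed.

Lemma phiS_hbr a b c n k p l q (f g : Jt) :
  phiS (hbracket a b c n k p l q f g) = hbracket (a * mu) (b / mu) c n k p l q (phiS f) (phiS g).
Proof.
rewrite /hbracket phiS_sum; apply: eq_bigr => r _.
by rewrite phiS_cstM phiS_M !phiS_iter.
Qed.

Lemma Jsum_cst N x (F : 'I_N -> Jt) : \sum_(r < N) cst x * F r = cst x * \sum_(r < N) F r.
Proof. by rewrite mulr_sumr. Qed.

Lemma rearr2 K x y (F G : Jt) : cst K * (cst x * F * (cst y * G)) = cst (x * y) * (cst K * (F * G)).
Proof. rewrite !cstM; move: (cst K) (cst x) (cst y) => u v w; ring. Qed.

Lemma hbr_scale a b c n k p l q x y (f g : Jt) :
  hbracket a b c n k p l q (cst x * f) (cst y * g) = cst (x * y) * hbracket a b c n k p l q f g.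
Proof.
rewrite /hbracket -Jsum_cst; apply: eq_bigr => r _.
by rewrite !iterS_cst rearr2.
Qed.

Lemma phiS_mbr a b c n i1 j1 l1 m1 i2 j2 l2 m2 :
  phiS (mbracket a b c n i1 j1 l1 m1 i2 j2 l2 m2) =
  cst (mu ^+ m1 * mu ^+ m2) * mbracket (a * mu) (b / mu) c n i1 j1 l1 m1 i2 j2 l2 m2.
Proof. by rewrite /mbracket phiS_hbr !phiS_mono hbr_scale. Qed.
Lemma nsum_ext (V : nmodType) (f : Jt) (F G : nat -> nat -> nat -> nat -> V) :
  (forall i j l m, F i j l m = G i j l m) -> nsum C V f F = nsum C V f G.
Proof.
move=> H; rewrite /nsum; apply: eq_bigr => m _; apply: eq_bigr => l _; apply: eq_bigr => j _.
by apply: eq_bigr => i _; exact: H.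
Qed.

Lemma phiS_nsum (f : Jt) (F : nat -> nat -> nat -> nat -> Jt) :
  phiS (nsum C _ f F) = nsum C _ f (fun i j l m => phiS (F i j l m)).
Proof.
rewrite /nsum phiS_sum; apply: eq_bigr => m _; rewrite phiS_sum; apply: eq_bigr => l _.
rewrite phiS_sum; apply: eq_bigr => j _; exact: phiS_sum.
Qed.

Lemma nsum_scale (V : nmodType) (f f' : Jt) (u : nat -> C) (F : nat -> nat -> nat -> nat -> V) :
  (forall m, u m != 0) -> size f' = size f -> (forall m, f'`_m = (u m)%:P%:P%:P * f`_m) ->
  nsum C V f' F = nsum C V f F.
Proof.
move=> nz hs hc; rewrite /nsum hs; apply: eq_bigr => m _; rewrite hc size_Cmul ?polyC_eq0 //.
apply: eq_bigr => l _; rewrite coefCM size_Cmul ?polyC_eq0 //.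
apply: eq_bigr => j _; rewrite coefCM size_Cmul ?polyC_eq0 //.
Qed.

Lemma phiS_bracket a b c n (f g : Jt) :
  phiS (bracket a b c n f g) = bracket (a * mu) (b / mu) c n (phiS f) (phiS g).
Proof.
have nz : forall m, mu ^+ m != 0 by move=> m; rewrite expf_neq0.
rewrite !bracket_nsum (@nsum_scale _ f (phiS f) (fun m => mu ^+ m) _ nz (size_phiS f) (coef_phiS f)).
rewrite phiS_nsum; apply: nsum_ext => i1 j1 l1 m1.
rewrite (@nsum_scale _ g (phiS g) (fun m => mu ^+ m) _ nz (size_phiS g) (coef_phiS g)).
rewrite phiS_nsum; apply: nsum_ext => i2 j2 l2 m2.
rewrite phiS_cstM phiS_mbr !jcoef_phiS JmulA -cstM; congr (cst _ * _).
ring.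
Qed.
End Phi.

Lemma modiso_scale (C : numClosedFieldType) (a b c mu : C) : mu != 0 ->
  modiso (a, b, c) (a * mu, b / mu, c).
Proof.
move=> mu0; exists (phiS C mu); split.
- exists (phiS C mu^-1) => f; apply: jcoef_ext => i j l m; rewrite !jcoef_phiS mulrA -exprMn.
    by rewrite mulVf // expr1n mul1r.
  by rewrite mulfV // expr1n mul1r.
- exact: phiS_D.
- exact: phiS_cstM.
- move=> k p f H i j l m; rewrite jcoef_phiS mulf_eq0 negb_or => /andP [_ nz]; exact: H.
- move=> n f g; exact: phiS_bracket.
Qed.

Theorem mainTheorem2 (C : numClosedFieldType) :
  (forall a' b' c' : C,
     (exists b c : C, modiso (a', b', c') (1, b, c))
     \/ (exists c : C, modiso (a', b', c') (0, 1, c))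
     \/ (exists c : C, modiso (a', b', c') (0, 0, c)))
  /\
  (forall t1 t2 : C * C * C,
     canonical_triple t1 -> canonical_triple t2 -> t1 <> t2 -> ~ modiso t1 t2).
Proof.
split.
  move=> a' b' c'; case: (eqVneq a' 0) => [a0|an0].
    subst a'; case: (eqVneq b' 0) => [b0|bn0].
      subst b'; right; right; exists c'.
      by have := @modiso_scale C 0 0 c' 1 (oner_neq0 C); rewrite !mul0r.
    right; left; exists c'.
    by have := @modiso_scale C 0 b' c' b' bn0; rewrite mul0r divff.
  left; exists (b' / a'^-1), c'.
  by have := @modiso_scale C a' b' c' a'^-1 (invr_neq0 an0); rewrite divff.
move=> [[a b] c] [[a' b'] c'] H1 H2 ne [phi [bij Hadd Hcst Hhom Hbr]].
have [be [mu [be0 mu0 ec R1 R3]]] := @inv_main C a b c a' b' c' phi (bij_inj bij) Hadd Hcst Hhom Hbr.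
subst c'; apply: ne.
case: H1 => [ea|[[ea eb]|[ea eb]]]; case: H2 => [ea'|[[ea' eb']|[ea' eb']]]; subst.
- move: R1 R3; rewrite !mul1r => ->; move/(mulIf be0) => -> //.
- by move: mu0; rewrite mul1r mul0r in R1; rewrite R1 eqxx.
- by move: mu0; rewrite mul1r mul0r in R1; rewrite R1 eqxx.
- by move: be0; rewrite mul1r mul0r in R1; rewrite -R1 eqxx.
- by [].
- by move: be0; rewrite mul1r mul0r in R3; rewrite R3 eqxx.
- by move: be0; rewrite mul1r mul0r in R1; rewrite -R1 eqxx.
- by move: mu0; rewrite mul1r mul0r in R3; rewrite -R3 eqxx.
- by [].
Qed.
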